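(* For every integer $s\geq 3$, the graph $\operatorname{KG}(2s+2,2)_{s-\operatorname{stab}}$ is a core.
   Context: For integers $s,k\geq 2$ and $n\geq ks$, a subset $S\subseteq[n]=\{1,\dots,n\}$ is $s$-stable if $s\leq |i-j|\leq n-s$ for all distinct $i,j\in S$. The $s$-stable Kneser graph $\operatorname{KG}(n,k)_{s-\operatorname{stab}}$ has as vertices the $s$-stable $k$-subsets of $[n]$, two vertices being adjacent iff they are disjoint. A finite graph $G$ is a core if every homomorphism (edge-preserving map) $G\to G$ is an automorphism of $G$, equivalently $G$ has no proper retract. *)

(* Defs.v *)
From mathcomp Require Import all_boot.
Unset Printing Implicit Defensive.

(* Ground set [n] = {1,..,n} is represented by 'I_n (element i stands for i+1);
   differences |i - j| are unaffected by the shift. *)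

Definition ndist (i j : nat) : nat := (i - j) + (j - i).

Definition stable (n s : nat) (S : {set 'I_n}) : bool :=
  [forall i in S, forall j in S,
     (i != j) ==> (s <= ndist i j <= n - s)].

Definition stabKG_vertex (n k s : nat) (S : {set 'I_n}) : bool :=
  (#|S| == k) && stable n s S.

Definition stabKG (n k s : nat) : Type :=
  { S : {set 'I_n} | stabKG_vertex n k s S }.

Definition stabKG_adj (n k s : nat) : rel (stabKG n k s) :=
  fun A B => [disjoint (val A) & (val B)].

Definition is_hom (V : Type) (adj : rel V) (f : V -> V) : Prop :=
  forall x y, adj x y -> adj (f x) (f y).

Definition is_aut (V : Type) (adj : rel V) (f : V -> V) : Prop :=
  bijective f /\ forall x y, adj (f x) (f y) = adj x y.

Definition is_core (V : Type) (adj : rel V) : Prop :=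
  forall f : V -> V, is_hom V adj f -> is_aut V adj f.

(* Main.v *)
From HB Require Import structures.
Require Import Defs.
From mathcomp Require Import all_boot all_fingroup zify.

HB.instance Definition _ (n k s : nat) :=
  Finite.copy (stabKG n k s) {S : {set 'I_n} | stabKG_vertex n k s S}.

Lemma double_count (T P : finType) (h : T -> {set P}) :
  \sum_(a : P) #|[set v | a \in h v]| = \sum_(v : T) #|h v|.
Proof.
transitivity (\sum_(a : P) \sum_(v : T) ((a \in h v) : nat)).
  apply: eq_bigr => a _. rewrite -sum1_card big_mkcond /=.
  apply: eq_bigr => v _; rewrite inE; by case: (a \in h v).
rewrite exchange_big /=; apply: eq_bigr => v _.
rewrite -sum1_card [RHS]big_mkcond /=.
by apply: eq_bigr => a _; case: (a \in h v).
Qed.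

Section S.
Variable s : nat.
Hypothesis s3 : 3 <= s.
Local Notation n := (2 * s + 2).
Local Notation V := (stabKG n 2 s).

Definition star (p : 'I_n) : {set V} := [set v : V | p \in val v].

Lemma vsize (v : V) : #|val v| = 2.
Proof. by have /andP[/eqP -> _] := valP v. Qed.

Lemma vdist (v : V) (c d : 'I_n) : c \in val v -> d \in val v -> c != d ->
  s <= ndist c d <= s + 2.
Proof.
move=> Hc Hd Hcd; have /andP[_ st] := valP v.
move: st => /forall_inP/(_ c Hc)/forall_inP/(_ d Hd)/implyP/(_ Hcd)/andP[h1 h2].
apply/andP; split; lia.
Qed.

Lemma mkv (c d : 'I_n) : c != d -> s <= ndist c d <= s + 2 ->
  exists v : V, val v = [set c; d].
Proof.
move=> Hcd Hdist.
have H : stabKG_vertex n 2 s [set c; d].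
  apply/andP; split; first by rewrite cards2 Hcd.
  move: Hdist => /andP[h1 h2].
  apply/forall_inP => i; rewrite !inE => /orP[]/eqP ->;
  apply/forall_inP => j; rewrite !inE => /orP[]/eqP ->;
  rewrite ?eqxx //=; apply/implyP => _; rewrite /ndist in h1 h2 *; apply/andP; split; lia.
by exists (exist (fun S : {set 'I_n} => stabKG_vertex n 2 s S) _ H).
Qed.

Lemma notri (p u w : 'I_n) : p != u -> p != w -> u != w ->
  s <= ndist p u <= s + 2 -> s <= ndist p w <= s + 2 ->
  s <= ndist u w <= s + 2 -> False.
Proof.
move=> a b c; have := ltn_ord p; have := ltn_ord u; have := ltn_ord w.
rewrite /ndist -!val_eqE /= in a b c *. lia.
Qed.

Lemma pair_eq (A : {set 'I_n}) (u w : 'I_n) : #|A| = 2 -> u \in A -> w \in A ->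
  u != w -> A = [set u; w].
Proof.
move=> cA hu hw uw; apply/eqP; rewrite eq_sym eqEcard cards2 uw cA leqnn andbT.
by apply/subsetP => x; rewrite !inE => /orP[]/eqP ->.
Qed.

Lemma vdecomp (v : V) (p : 'I_n) : p \in val v ->
  exists u, u != p /\ val v = [set p; u].
Proof.
move=> hp; have /cards2P [x [y [xy e]]] : #|val v| == 2 by rewrite vsize.
move: hp; rewrite e !inE => /orP[]/eqP ->.
  by exists y; split; rewrite // eq_sym.
by exists x; split; [done | rewrite setUC].
Qed.

Lemma common (F : {set V}) :
  (forall x y, x \in F -> y \in F -> ~~ [disjoint val x & val y]) ->
  forall x y, x \in F -> y \in F -> x != y -> exists p, F \subset star p.
Proof.
move=> Fint x y xF yF xy.
have := Fint x y xF yF; rewrite -setI_eq0 => /set0Pn [p]; rewrite inE => /andP[px py].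
exists p; apply/subsetP => t tF; rewrite inE; apply/negPn/negP => pt.
have [u [up ex]] := vdecomp _ _ px; have [w [wp ey]] := vdecomp _ _ py.
have uw : u != w.
  by apply: contraNneq xy => euw; apply/eqP/val_inj; rewrite ex ey euw.
have ut : u \in val t.
  have := Fint x t xF tF; rewrite -setI_eq0 => /set0Pn [q].
  rewrite inE ex !inE => /andP[/orP[]/eqP-> qt]; first by rewrite qt in pt.
  by [].
have wt : w \in val t.
  have := Fint y t yF tF; rewrite -setI_eq0 => /set0Pn [q].
  rewrite inE ey !inE => /andP[/orP[]/eqP-> qt]; first by rewrite qt in pt.
  by [].
apply: (@notri p u w).
- by rewrite eq_sym.
- by rewrite eq_sym.
- done.
- by apply: (vdist _ _ _ px); rewrite // ?ex ?inE ?eqxx ?orbT // eq_sym.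
- by apply: (vdist _ _ _ py); rewrite // ?ey ?inE ?eqxx ?orbT // eq_sym.
- exact: (vdist _ _ _ ut wt).
Qed.

Lemma n_gt0 : 0 < n. Proof. lia. Qed.

Definition shk (k : nat) (c : 'I_n) : 'I_n := Ordinal (ltn_pmod (c + k) n_gt0).

Lemma shkE k (c : 'I_n) : k <= n ->
  val (shk k c) = if c + k < n then c + k else c + k - n.
Proof.
move=> kn /=; case: ifP => h; first by rewrite modn_small.
have e : c + k = (c + k - n) + n by have := ltn_ord c; lia.
rewrite {1}e modnDr modn_small //; have := ltn_ord c; lia.
Qed.


Definition Q (p : 'I_n) := [set q : 'I_n | (q != p) && (s <= ndist p q <= s + 2)].

Lemma Qeq p : Q p = shk s p |: [set shk (s + 1) p; shk (s + 2) p].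
Proof.
apply/setP => q; rewrite !inE -!val_eqE !shkE; try lia.
have := ltn_ord p; have := ltn_ord q; rewrite /ndist.
simpl; do 3 (case: ifP => ?). all: lia.
Qed.

Lemma Qcard p : #|Q p| = 3.
Proof.
rewrite Qeq cardsU1 cards2 !inE -!val_eqE !shkE; try lia.
simpl; have := ltn_ord p; do 3 (case: ifP => ?); lia.
Qed.

Lemma star_card p : #|star p| = 3.
Proof.
rewrite -(Qcard p).
have inj1 : {in star p &, injective (fun v : V => val v)}.
  by move=> x y _ _; apply: val_inj.
have inj2 : {in Q p &, injective (fun q => [set p; q])}.
  move=> q q'; rewrite !inE => /andP[qp _] _ e.
  have : q \in [set p; q'] by rewrite -e !inE eqxx orbT.
  by rewrite !inE (negbTE qp) => /eqP.
rewrite -(card_in_imset inj1) -(card_in_imset inj2); apply: eq_card => A; apply/imsetP/imsetP.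
- move=> [v vS ->].
  rewrite inE in vS; have [u [up e]] := vdecomp _ _ vS.
  exists u; last by [].
  rewrite inE; apply/andP; split; first exact: up.
  apply: (vdist v); rewrite ?e ?inE ?eqxx ?orbT //; rewrite eq_sym; exact: up.
- move=> [q qQ ->].
  move: (qQ); rewrite inE => /andP[qp hd].
  have [v e] : exists v : V, val v = [set p; q].
    by apply: mkv => //; rewrite eq_sym.
  by exists v; rewrite ?inE ?e // set21.
Qed.


Lemma sum_eq3 (T : finType) (E : T -> nat) :
  (forall a, E a <= 3) -> \sum_a E a = \sum_(a : T) 3 -> forall a, E a = 3.
Proof.
move=> le3 hs.
have h0 : \sum_a (3 - E a) = 0.
  have : \sum_(a : T) 3 = \sum_a E a + \sum_a (3 - E a).
    rewrite -big_split /=; apply: eq_bigr => a _; have := le3 a; lia.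
  rewrite -hs; lia.
move=> a; move/eqP: h0; rewrite sum_nat_eq0 => /forallP/(_ a)/eqP.
have := le3 a; lia.
Qed.

Variable f : V -> V.
Hypothesis hom : is_hom V (stabKG_adj n 2 s) f.

Definition F (a : 'I_n) : {set V} := [set v : V | a \in val (f v)].

Lemma F_int a x y : x \in F a -> y \in F a -> ~~ [disjoint val x & val y].
Proof.
rewrite !inE => hx hy; apply/negP => dj.
have := hom x y dj; rewrite /stabKG_adj -setI_eq0 => /eqP H.
have : a \in val (f x) :&: val (f y) by rewrite inE hx hy.
by rewrite H inE.
Qed.

Lemma F_sub a : 1 < #|F a| -> exists p, F a \subset star p.
Proof.
move=> /card_gt1P [x [y [hx hy xy]]].
exact: (common (F a) (fun x y => @F_int a x y) x y hx hy xy).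
Qed.

Lemma F_le3 a : #|F a| <= 3.
Proof.
case: (ltnP 1 #|F a|) => h; last by apply: (leq_trans h).
have [p hp] := F_sub a h; rewrite -(star_card p); exact: subset_leq_card.
Qed.

Lemma F_card a : #|F a| = 3.
Proof.
have K := @sum_eq3 _ (fun a => #|F a|).
suff hs : \sum_a #|F a| = \sum_(a : 'I_n) 3 by exact: (K F_le3 hs a).
have h1 := double_count _ _ (fun v : V => val (f v)).
have h2 := double_count _ _ (fun v : V => val v).
rewrite /F h1.
transitivity (\sum_(v : V) #|val v|).
  by apply: eq_bigr => v _; rewrite !vsize.
rewrite -h2; apply: eq_bigr => b _; exact: (star_card b).
Qed.

Definition g (a : 'I_n) : 'I_n := odflt a [pick p | F a \subset star p].

Lemma Fg a : F a = star (g a).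
Proof.
have [p hp] : exists p, F a \subset star p by apply: F_sub; rewrite F_card.
rewrite /g; case: pickP => [q hq | none]; last by have := none p; rewrite hp.
by apply/eqP; rewrite eqEcard hq /= F_card star_card.
Qed.

Lemma mem_fv a v : (a \in val (f v)) = (g a \in val v).
Proof.
have := Fg a; move/setP/(_ v); by rewrite !inE.
Qed.

Definition N (c : 'I_n) := #|[set a | g a == c]|.

Lemma Nedge (c d : 'I_n) : c != d -> s <= ndist c d <= s + 2 -> N c + N d = 2.
Proof.
move=> cd hd; have [v e] := mkv c d cd hd.
rewrite -(vsize (f v)).
have -> : #|val (f v)| = #|[set a | g a == c] :|: [set a | g a == d]|.
  apply: eq_card => a; rewrite mem_fv e !inE; by [].
rewrite cardsU.
have -> : [set a | g a == c] :&: [set a | g a == d] = set0.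
  apply/setP => a; rewrite !inE; apply/negP => /andP[/eqP -> /eqP ecd].
  by rewrite ecd eqxx in cd.
rewrite cards0 subn0 /N; by [].
Qed.


Lemma Nstep (c : 'I_n) : N c + N (shk s c) = 2.
Proof.
apply: Nedge; rewrite -?val_eqE shkE /ndist; have := ltn_ord c; try lia.
by case: ifP => ? /=; lia.
by case: ifP => ? /=; lia.
Qed.

Lemma Nstep1 (c : 'I_n) : N c + N (shk (s + 1) c) = 2.
Proof.
apply: Nedge; rewrite -?val_eqE shkE /ndist; have := ltn_ord c; try lia.
by case: ifP => ? /=; lia.
by case: ifP => ? /=; lia.
Qed.

Lemma iterE j (p : 'I_n) : val (iter j (shk s) p) = (p + j * s) %% n.
Proof.
elim: j => [|j IH]; first by rewrite mul0n addn0 modn_small.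
have e : p + j.+1 * s = p + j * s + s by nia.
by rewrite iterS /= IH modnDml e.
Qed.

Lemma Nalt j (p : 'I_n) : N (iter j (shk s) p) = if odd j then 2 - N p else N p.
Proof.
elim: j => [|j IH] //.
have h := Nstep (iter j (shk s) p); have h0 := Nstep p.
rewrite iterS /=; move: IH h; case: (odd j) => /= IH h; lia.
Qed.

Lemma N1 (p : 'I_n) : N p = 1.
Proof.
have hs := odd_double_half s.
case ev: (odd s).
- pose q := shk (s + 1) p.
  have hq := Nstep1 p.
  have e : iter (s + 1) (shk s) q = p.
    apply: val_inj; rewrite iterE /q /= modnDml.
    have -> : p + (s + 1) + (s + 1) * s = p + (s./2 + 1) * n.
      rewrite ev in hs. nia.
    by rewrite addnC modnMDl modn_small.
  have := Nalt (s + 1) q; rewrite e addn1 /= ev /=.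
  rewrite -/q in hq; lia.
- have e : iter (s + 1) (shk s) p = p.
    apply: val_inj; rewrite iterE.
    have -> : p + (s + 1) * s = p + s./2 * n.
      rewrite ev in hs. nia.
    by rewrite addnC modnMDl modn_small.
  have := Nalt (s + 1) p; rewrite e addn1 /= ev /=; lia.
Qed.

Lemma f_inj : injective f.
Proof.
move=> x y exy.
have /cards2P [a [b [ab e]]] : #|val (f x)| == 2 by rewrite vsize.
have gab : g a != g b.
  apply/negP => /eqP gab.
  have : #|[set a; b]| <= N (g a).
    apply: subset_leq_card; apply/subsetP => c; rewrite !inE.
    by case/orP => /eqP ->; rewrite ?gab eqxx.
  by rewrite cards2 ab N1.
have ha : forall z, f z = f x -> val z = [set g a; g b].
  move=> z ez; apply: pair_eq => //; first exact: vsize.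
    by rewrite -mem_fv ez e !inE eqxx.
  by rewrite -mem_fv ez e !inE eqxx orbT.
by apply: val_inj; rewrite (ha x) // (ha y).
Qed.

End S.

Theorem mainTheorem4 (s : nat) : 3 <= s ->
  is_core (stabKG (2 * s + 2) 2 s) (stabKG_adj (2 * s + 2) 2 s).
Proof.
move=> s3 f hom.
have finj := @f_inj s s3 f hom.
have bij := injF_bij finj.
split=> // x y.
apply/idP/idP; last exact: hom.
pose p := perm finj.
have hiter : forall k x y, stabKG_adj (2 * s + 2) 2 s x y ->
    stabKG_adj (2 * s + 2) 2 s (iter k f x) (iter k f y).
  by move=> k; elim: k => [|k IH] x0 y0 h //=; apply: hom; apply: IH.
have ord : forall z, iter #[p]%g f z = z.
  move=> z; have := congr1 (fun q : {perm _} => q z) (expg_order p).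
  rewrite /= permX perm1.
  have ip : forall k, iter k p z = iter k f z.
    by elim=> //= k ->; rewrite permE.
  by rewrite ip.
move=> h; have := hiter (#[p]%g.-1) _ _ h.
rewrite -!iterSr prednK ?order_gt0 //.
by rewrite !ord.
Qed.
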